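(* Let $\alpha,\beta,\mu\in\mathbb{R}\setminus\{0\}$ with $\Delta:=\alpha^2+\beta^2-2\mu^2>0$, $x_1,x_2\in\mathbb{R}$, and let $B=B^{nv}_{\alpha,\beta,\mu}$ be the mKdV breather with nonvanishing boundary value $\mu$. Let $\tilde B(t,x):=\mu x+2\sqrt2\arctan(g/f)$ (a smooth continuous-branch determination, so $\partial_x\tilde B=B$) and $\mathcal{M}_{nv}(t,x):=\frac12\int_{-\infty}^x(B^2(t,s)-\mu^2)\,ds$. Then for all $t\in\mathbb{R}$, $$B_{xt}+2(\partial_t\mathcal{M}_{nv})B=\big(2(\beta^2-\alpha^2)+5\mu^2\big)\partial_t\tilde B+\Big((\alpha^2+\beta^2)^2+6\mu^2\big(\beta^2-\alpha^2+\tfrac32\mu^2\big)\Big)(B-\mu).$$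
   Context: With $\delta:=\alpha^2-3\beta^2$, $\gamma:=3\alpha^2-\beta^2$, $y_1:=x+\delta t+x_1$, $y_2:=x+\gamma t+x_2$, $$G_\mu(t,x):=\frac{\beta\sqrt{\alpha^2+\beta^2}}{\alpha\sqrt{\Delta}}\sin(\alpha y_1)-\frac{\sqrt2\,\mu\beta\, e^{\beta y_2}}{\Delta},\qquad F_\mu(t,x):=\cosh(\beta y_2)-\frac{\sqrt2\,\mu\beta\,[\alpha\cos(\alpha y_1)-\beta\sin(\alpha y_1)]}{\alpha\sqrt{\alpha^2+\beta^2}\sqrt{\Delta}}.$$ Let $g(t,x):=G_\mu(t,x-3\mu^2t)$, $f(t,x):=F_\mu(t,x-3\mu^2t)$, and $B^{nv}_{\alpha,\beta,\mu}(t,x;x_1,x_2):=\mu+2\sqrt2\,\partial_x[\arctan(g/f)]=\mu+2\sqrt2\frac{fg_x-gf_x}{f^2+g^2}$, a solution of the mKdV equation $u_t+(u_{xx}+u^3)_x=0$ tending to $\mu$ at $\pm\infty$. *)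

(* Defs.v *)
From Stdlib Require Import Reals ZArith.
From Coquelicot Require Import Coquelicot.
Open Scope R_scope.

Section Breather.
Variables (alpha beta mu x1 x2 : R).

Definition Dnv : R := alpha ^ 2 + beta ^ 2 - 2 * mu ^ 2.
Definition delta_ : R := alpha ^ 2 - 3 * beta ^ 2.
Definition gamma_ : R := 3 * alpha ^ 2 - beta ^ 2.
Definition y1 (t x : R) : R := x + delta_ * t + x1.
Definition y2 (t x : R) : R := x + gamma_ * t + x2.

Definition Gmu (t x : R) : R :=
  beta * sqrt (alpha ^ 2 + beta ^ 2) / (alpha * sqrt Dnv) * sin (alpha * y1 t x)
  - sqrt 2 * mu * beta * exp (beta * y2 t x) / Dnv.

Definition Fmu (t x : R) : R :=
  cosh (beta * y2 t x)
  - sqrt 2 * mu * beta * (alpha * cos (alpha * y1 t x) - beta * sin (alpha * y1 t x))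
    / (alpha * sqrt (alpha ^ 2 + beta ^ 2) * sqrt Dnv).

Definition gfun (t x : R) : R := Gmu t (x - 3 * mu ^ 2 * t).
Definition ffun (t x : R) : R := Fmu t (x - 3 * mu ^ 2 * t).

Definition Bnv (t x : R) : R :=
  mu + 2 * sqrt 2 *
    (ffun t x * Derive (fun y => gfun t y) x - gfun t x * Derive (fun y => ffun t y) x)
    / (ffun t x ^ 2 + gfun t x ^ 2).

Definition Mnv (t x : R) : R :=
  / 2 * RInt_gen (fun s => Bnv t s ^ 2 - mu ^ 2) (Rbar_locally m_infty) (at_point x).

Definition is_Btilde (Bt : R -> R -> R) : Prop :=
  (forall p : R * R, continuous (fun q : R * R => Bt (fst q) (snd q)) p) /\
  (forall t x : R, ffun t x <> 0 ->
     exists k : Z, Bt t x = mu * x + 2 * sqrt 2 * (atan (gfun t x / ffun t x) + IZR k * PI)).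

End Breather.

(* Main.v *)
Require Import Defs.
From Stdlib Require Import Reals ZArith.
From Coquelicot Require Import Coquelicot.
From Stdlib Require Import Lra Lia Psatz Ring Field Classical.
Open Scope R_scope.

Definition Jf (a b m r S d s c E Ei : R) : R :=
  ((2*b^2*m*r*d*s + a*S*d^2*Ei + a*S*d^2*E - 2*a*b*m*r*d*c)).
Definition Jfx (a b m r S d s c E Ei : R) : R :=
  ((- a*b*S*d^2*Ei + a*b*S*d^2*E + 2*a*b^2*m*r*d*c + 2*a^2*b*m*r*d*s)).
Definition Jfxx (a b m r S d s c E Ei : R) : R :=
  ((a*b^2*S*d^2*Ei + a*b^2*S*d^2*E - 2*a^2*b^2*m*r*d*s + 2*a^3*b*m*r*d*c)).
Definition Jft (a b m r S d s c E Ei : R) : R :=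
  ((3*a*b*m^2*S*d^2*Ei - 3*a*b*m^2*S*d^2*E - 6*a*b^2*m^3*r*d*c + a*b^3*S*d^2*Ei - a*b^3*S*d^2*E - 6*a*b^4*m*r*d*c - 6*a^2*b*m^3*r*d*s - 6*a^2*b^3*m*r*d*s)
 + (- 3*a^3*b*S*d^2*Ei + 3*a^3*b*S*d^2*E + 2*a^3*b^2*m*r*d*c + 2*a^4*b*m*r*d*s)).
Definition Jfxt (a b m r S d s c E Ei : R) : R :=
  ((- 3*a*b^2*m^2*S*d^2*Ei - 3*a*b^2*m^2*S*d^2*E - a*b^4*S*d^2*Ei - a*b^4*S*d^2*E + 6*a^2*b^2*m^3*r*d*s + 6*a^2*b^4*m*r*d*s - 6*a^3*b*m^3*r*d*c + 3*a^3*b^2*S*d^2*Ei)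
 + (3*a^3*b^2*S*d^2*E - 6*a^3*b^3*m*r*d*c - 2*a^4*b^2*m*r*d*s + 2*a^5*b*m*r*d*c)).
Definition Jfxxt (a b m r S d s c E Ei : R) : R :=
  ((3*a*b^3*m^2*S*d^2*Ei - 3*a*b^3*m^2*S*d^2*E + a*b^5*S*d^2*Ei - a*b^5*S*d^2*E + 6*a^3*b^2*m^3*r*d*c - 3*a^3*b^3*S*d^2*Ei + 3*a^3*b^3*S*d^2*E + 6*a^3*b^4*m*r*d*c)
 + (6*a^4*b*m^3*r*d*s + 6*a^4*b^3*m*r*d*s - 2*a^5*b^2*m*r*d*c - 2*a^6*b*m*r*d*s)).
Definition Jftt (a b m r S d s c E Ei : R) : R :=
  ((9*a*b^2*m^4*S*d^2*Ei + 9*a*b^2*m^4*S*d^2*E + 6*a*b^4*m^2*S*d^2*Ei + 6*a*b^4*m^2*S*d^2*E + a*b^6*S*d^2*Ei + a*b^6*S*d^2*E - 18*a^2*b^2*m^5*r*d*s - 36*a^2*b^4*m^3*r*d*s)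
 + (- 18*a^2*b^6*m*r*d*s + 18*a^3*b*m^5*r*d*c - 18*a^3*b^2*m^2*S*d^2*Ei - 18*a^3*b^2*m^2*S*d^2*E + 36*a^3*b^3*m^3*r*d*c - 6*a^3*b^4*S*d^2*Ei - 6*a^3*b^4*S*d^2*E + 18*a^3*b^5*m*r*d*c)
 + (12*a^4*b^2*m^3*r*d*s + 12*a^4*b^4*m*r*d*s - 12*a^5*b*m^3*r*d*c + 9*a^5*b^2*S*d^2*Ei + 9*a^5*b^2*S*d^2*E - 12*a^5*b^3*m*r*d*c - 2*a^6*b^2*m*r*d*s + 2*a^7*b*m*r*d*c)).
Definition Jg (a b m r S d s c E Ei : R) : R :=
  ((2*b*S^2*d*s - 2*a*b*m*r*S*E)).
Definition Jgx (a b m r S d s c E Ei : R) : R :=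
  ((2*a*b*S^2*d*c - 2*a*b^2*m*r*S*E)).
Definition Jgxx (a b m r S d s c E Ei : R) : R :=
  ((- 2*a*b^3*m*r*S*E - 2*a^2*b*S^2*d*s)).
Definition Jgt (a b m r S d s c E Ei : R) : R :=
  ((- 6*a*b*m^2*S^2*d*c + 6*a*b^2*m^3*r*S*E - 6*a*b^3*S^2*d*c + 2*a*b^4*m*r*S*E + 2*a^3*b*S^2*d*c - 6*a^3*b^2*m*r*S*E)).
Definition Jgxt (a b m r S d s c E Ei : R) : R :=
  ((6*a*b^3*m^3*r*S*E + 2*a*b^5*m*r*S*E + 6*a^2*b*m^2*S^2*d*s + 6*a^2*b^3*S^2*d*s - 6*a^3*b^3*m*r*S*E - 2*a^4*b*S^2*d*s)).
Definition Jgxxt (a b m r S d s c E Ei : R) : R :=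
  ((6*a*b^4*m^3*r*S*E + 2*a*b^6*m*r*S*E + 6*a^3*b*m^2*S^2*d*c + 6*a^3*b^3*S^2*d*c - 6*a^3*b^4*m*r*S*E - 2*a^5*b*S^2*d*c)).

Definition Ppoly (r m C1 C2 f fx fxx ft fxt fxxt g gx gxx gt gxt gxxt : R) : R :=
  let W := f*f+g*g in
  let Wx := 2*(f*fx+g*gx) in
  let Wt := 2*(f*ft+g*gt) in
  let Wxt := 2*(ft*fx+f*fxt+(gt*gx+g*gxt)) in
  let N := f*gx-g*fx in
  let Nx := f*gxx-g*fxx in
  let Nt := ft*gx+f*gxt-(gt*fx+g*fxt) in
  let Nxt := ft*gxx+f*gxxt-(gt*fxx+g*fxxt) in
  let T := f*gt-g*ft in
  2*((Nxt*W+Nx*Wt-(Nt*Wx+N*Wxt))*W) - 4*((Nx*W-N*Wx)*Wt)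
  + (Wxt*W-Wx*Wt)*(r*m*W+4*N) - 2*((C1*T+C2*N)*W*W).
Definition I1poly (r m f fx fxx g gx gxx : R) : R :=
  let W := f*f+g*g in
  let Wx := 2*(f*fx+g*gx) in
  let Wxx := 2*(fx*fx+f*fxx+(gx*gx+g*gxx)) in
  let N := f*gx-g*fx in
  4*(r*m)*N*W + 8*(N*N) - 2*(Wxx*W-Wx*Wx).
Definition C1v (a b m : R) := 2*(b^2-a^2)+5*m^2.
Definition C2v (a b m : R) := (a^2+b^2)*(a^2+b^2)+6*(m^2*(b^2-a^2))+9*(m^2*m^2).

Lemma P_ok (a b m r S d s c E Ei : R) (hr : r^2 = 2) (hS : S^2 = a^2+b^2) (hd : d^2 = a^2+b^2-2*m^2)
  (hs : s^2 = 1 - c^2) (hE : E*Ei = 1) :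
  Ppoly r m (C1v a b m) (C2v a b m) (Jf a b m r S d s c E Ei) (Jfx a b m r S d s c E Ei) (Jfxx a b m r S d s c E Ei)
    (Jft a b m r S d s c E Ei) (Jfxt a b m r S d s c E Ei) (Jfxxt a b m r S d s c E Ei)
    (Jg a b m r S d s c E Ei) (Jgx a b m r S d s c E Ei) (Jgxx a b m r S d s c E Ei)
    (Jgt a b m r S d s c E Ei) (Jgxt a b m r S d s c E Ei) (Jgxxt a b m r S d s c E Ei) = 0.
Proof. unfold Ppoly, C1v, C2v, Jf, Jfx, Jfxx, Jft, Jfxt, Jfxxt, Jg, Jgx, Jgxx, Jgt, Jgxt, Jgxxt. ring [hr hS hd hs hE]. Qed.

Lemma I1_ok (a b m r S d s c E Ei : R) (hr : r^2 = 2) (hS : S^2 = a^2+b^2) (hd : d^2 = a^2+b^2-2*m^2)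
  (hs : s^2 = 1 - c^2) (hE : E*Ei = 1) :
  I1poly r m (Jf a b m r S d s c E Ei) (Jfx a b m r S d s c E Ei) (Jfxx a b m r S d s c E Ei)
    (Jg a b m r S d s c E Ei) (Jgx a b m r S d s c E Ei) (Jgxx a b m r S d s c E Ei) = 0.
Proof. unfold I1poly, Jf, Jfx, Jfxx, Jg, Jgx, Jgxx. ring [hr hS hd hs hE]. Qed.

Lemma Ppoly_scale (k r m C1 C2 f fx fxx ft fxt fxxt g gx gxx gt gxt gxxt : R) : k <> 0 ->
  Ppoly r m C1 C2 (f/k) (fx/k) (fxx/k) (ft/k) (fxt/k) (fxxt/k) (g/k) (gx/k) (gxx/k) (gt/k) (gxt/k) (gxxt/k)
  = Ppoly r m C1 C2 f fx fxx ft fxt fxxt g gx gxx gt gxt gxxt / k^6.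
Proof. intros. unfold Ppoly. field. auto. Qed.

Lemma I1poly_scale (k r m f fx fxx g gx gxx : R) : k <> 0 ->
  I1poly r m (f/k) (fx/k) (fxx/k) (g/k) (gx/k) (gxx/k) = I1poly r m f fx fxx g gx gxx / k^4.
Proof. intros. unfold I1poly. field. auto. Qed.

Definition WF f g := f*f+g*g.
Definition NF f fx g gx := f*gx-g*fx.
Definition BF (m r f fx g gx : R) := m + 2*r*(f*gx-g*fx)/(f^2+g^2).
Definition BxF (r f fx fxx g gx gxx : R) :=
  let W := f*f+g*g in let Wx := 2*(f*fx+g*gx) in
  let N := f*gx-g*fx in let Nx := f*gxx-g*fxx in
  2*r*((Nx*W-N*Wx)/(W*W)).
Definition BxtF (r f fx fxx ft fxt fxxt g gx gxx gt gxt gxxt : R) :=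
  let W := f*f+g*g in
  let Wx := 2*(f*fx+g*gx) in
  let Wt := 2*(f*ft+g*gt) in
  let Wxt := 2*(ft*fx+f*fxt+(gt*gx+g*gxt)) in
  let N := f*gx-g*fx in
  let Nx := f*gxx-g*fxx in
  let Nt := ft*gx+f*gxt-(gt*fx+g*fxt) in
  let Nxt := ft*gxx+f*gxxt-(gt*fxx+g*fxxt) in
  2*r*(((Nxt*W+Nx*Wt-(Nt*Wx+N*Wxt))*W - 2*((Nx*W-N*Wx)*Wt))/(W*W*W)).
Definition HF (f fx g gx : R) := 2*(f*fx+g*gx)/(f*f+g*g).
Definition HxF (f fx fxx g gx gxx : R) :=
  let W := f*f+g*g in let Wx := 2*(f*fx+g*gx) in
  let Wxx := 2*(fx*fx+f*fxx+(gx*gx+g*gxx)) in (Wxx*W-Wx*Wx)/(W*W).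
Definition HtF (f fx ft fxt g gx gt gxt : R) :=
  let W := f*f+g*g in let Wx := 2*(f*fx+g*gx) in
  let Wt := 2*(f*ft+g*gt) in
  let Wxt := 2*(ft*fx+f*fxt+(gt*gx+g*gxt)) in (Wxt*W-Wx*Wt)/(W*W).
Definition ThF (f ft g gt : R) := (f*gt-g*ft)/(f*f+g*g).

Lemma final_alg (a b m r f fx fxx ft fxt fxxt g gx gxx gt gxt gxxt : R) :
  r^2 = 2 -> f*f+g*g <> 0 ->
  Ppoly r m (C1v a b m) (C2v a b m) f fx fxx ft fxt fxxt g gx gxx gt gxt gxxt = 0 ->
  BxtF r f fx fxx ft fxt fxxt g gx gxx gt gxt gxxt
  + 2 * HtF f fx ft fxt g gx gt gxt * BF m r f fx g gx
  = (2 * (b ^ 2 - a ^ 2) + 5 * m ^ 2) * (2 * r * ThF f ft g gt)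
    + ((a ^ 2 + b ^ 2) ^ 2 + 6 * m ^ 2 * (b ^ 2 - a ^ 2 + 3 / 2 * m ^ 2))
      * (BF m r f fx g gx - m).
Proof.
  intros hr hW hP.
  assert (E1 : BxtF r f fx fxx ft fxt fxxt g gx gxx gt gxt gxxt
  + 2 * HtF f fx ft fxt g gx gt gxt * BF m r f fx g gx
  - ((2 * (b ^ 2 - a ^ 2) + 5 * m ^ 2) * (2 * r * ThF f ft g gt)
    + ((a ^ 2 + b ^ 2) ^ 2 + 6 * m ^ 2 * (b ^ 2 - a ^ 2 + 3 / 2 * m ^ 2))
      * (BF m r f fx g gx - m))
  = r / (f*f+g*g)^3 * Ppoly r m (C1v a b m) (C2v a b m) f fx fxx ft fxt fxxt g gx gxx gt gxt gxxt
    + (2 - r^2) * m * HtF f fx ft fxt g gx gt gxt).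
  { unfold BxtF, HtF, BF, ThF, Ppoly, C1v, C2v. field. auto. }
  rewrite hP, hr in E1. lra.
Qed.

Lemma I1_alg (m r f fx fxx g gx gxx : R) : r^2 = 2 -> f*f+g*g <> 0 ->
  I1poly r m f fx fxx g gx gxx = 0 ->
  2 * HxF f fx fxx g gx gxx = BF m r f fx g gx ^ 2 - m ^ 2.
Proof.
  intros hr hW hP.
  assert (E1 : BF m r f fx g gx ^ 2 - m ^ 2 - 2 * HxF f fx fxx g gx gxx
     = I1poly r m f fx fxx g gx gxx / (f*f+g*g)^2 + (r^2-2)*4*(f*gx-g*fx)^2/(f*f+g*g)^2).
  { unfold BF, HxF, I1poly. field. auto. }
  rewrite hP, hr in E1. lra.
Qed.


Ltac side_tac := repeat match goal with
  | |- _ /\ _ => split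
  | |- True => exact I
  | |- ex_derive _ _ => eexists; eassumption
  | |- _ <> 0 => let HH := fresh in intro HH; nra
  end.

Lemma Derive_of (f : R -> R) (x l : R) : is_derive f x l -> Derive (fun y : R => f y) x = l.
Proof. intro h. apply is_derive_unique. exact h. Qed.

Ltac rw_derive := repeat match goal with
  | h : is_derive ?F ?x ?l |- context [Derive (fun y => ?F y) ?x] =>
      rewrite (Derive_of F x l h)
  end.

Lemma gen_dx (F FX FXX G GX GXX : R -> R) (x m r : R) :
 is_derive F x (FX x) -> is_derive FX x (FXX x) -> is_derive G x (GX x) -> is_derive GX x (GXX x) ->
 0 < F x * F x + G x * G x ->
 is_derive (fun y => BF m r (F y) (FX y) (G y) (GX y)) x (BxF r (F x) (FX x) (FXX x) (G x) (GX x) (GXX x)).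
Proof.
  intros h1 h2 h3 h4 hW. unfold BF, BxF. auto_derive; [ side_tac | ].
  rw_derive; match goal with |- ?A = ?B => change (@eq R A B) end; field; nra.
Qed.

Lemma gen_dt (F FX FXX FT FXT FXXT G GX GXX GT GXT GXXT : R -> R) (t r : R) :
 is_derive F t (FT t) -> is_derive FX t (FXT t) -> is_derive FXX t (FXXT t) ->
 is_derive G t (GT t) -> is_derive GX t (GXT t) -> is_derive GXX t (GXXT t) ->
 0 < F t * F t + G t * G t ->
 is_derive (fun s => BxF r (F s) (FX s) (FXX s) (G s) (GX s) (GXX s)) t
   (BxtF r (F t) (FX t) (FXX t) (FT t) (FXT t) (FXXT t) (G t) (GX t) (GXX t) (GT t) (GXT t) (GXXT t)).
Proof.
  intros h1 h2 h3 h4 h5 h6 hW. unfold BxF, BxtF. auto_derive; [ side_tac | ].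
  rw_derive; match goal with |- ?A = ?B => change (@eq R A B) end; field; nra.
Qed.

Lemma gen_Hx (F FX FXX G GX GXX : R -> R) (x : R) :
 is_derive F x (FX x) -> is_derive FX x (FXX x) -> is_derive G x (GX x) -> is_derive GX x (GXX x) ->
 0 < F x * F x + G x * G x ->
 is_derive (fun y => HF (F y) (FX y) (G y) (GX y)) x (HxF (F x) (FX x) (FXX x) (G x) (GX x) (GXX x)).
Proof.
  intros h1 h2 h3 h4 hW. unfold HF, HxF. auto_derive; [ side_tac | ].
  rw_derive; match goal with |- ?A = ?B => change (@eq R A B) end; field; nra.
Qed.

Lemma gen_Ht (F FX FT FXT G GX GT GXT : R -> R) (t : R) :
 is_derive F t (FT t) -> is_derive FX t (FXT t) -> is_derive G t (GT t) -> is_derive GX t (GXT t) ->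
 0 < F t * F t + G t * G t ->
 is_derive (fun s => HF (F s) (FX s) (G s) (GX s)) t (HtF (F t) (FX t) (FT t) (FXT t) (G t) (GX t) (GT t) (GXT t)).
Proof.
  intros h1 h2 h3 h4 hW. unfold HF, HtF. auto_derive; [ side_tac | ].
  rw_derive; match goal with |- ?A = ?B => change (@eq R A B) end; field; nra.
Qed.


Lemma cont_eps (D : R -> R) t : continuous D t ->
  forall eps, 0 < eps -> exists d, 0 < d /\ forall s, Rabs (s - t) < d -> Rabs (D s - D t) < eps.
Proof.
  intros hc eps he.
  destruct (proj1 (filterlim_locally _ _) hc (mkposreal eps he)) as [d Hd].
  exists d. split. apply cond_pos. intros s hs. apply (Hd s). exact hs.
Qed.

Lemma int_close (c : R) (k1 k2 : Z) : 0 < c -> Rabs (c * IZR k1 - c * IZR k2) < c -> k1 = k2.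
Proof.
  intros hc h. replace (c * IZR k1 - c * IZR k2) with (c * IZR (k1 - k2)) in h by (rewrite minus_IZR; ring).
  rewrite Rabs_mult, (Rabs_pos_eq c) in h by lra.
  assert (Rabs (IZR (k1 - k2)) < 1) by (apply (Rmult_lt_reg_l c); lra).
  apply Rabs_def2 in H. destruct H as [h1 h2].
  assert (h3 : IZR (k1 - k2) < 1) by lra.
  assert (h4 : IZR (k2 - k1) < 1) by (rewrite minus_IZR; rewrite minus_IZR in h2; lra).
  change 1 with (IZR 1) in h3, h4.
  apply lt_IZR in h3. apply lt_IZR in h4. lia.
Qed.

Lemma loc_const (D : R -> R) (t c d : R) : continuous D t -> 0 < c -> 0 < d ->
  (forall s, Rabs (s - t) < d -> exists k : Z, D s = c * IZR k) ->
  locally t (fun s => D s = D t).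
Proof.
  intros hc hc0 hd hk.
  destruct (cont_eps D t hc c hc0) as [d1 [hd1 H1]].
  assert (hm : 0 < Rmin d d1) by (apply Rmin_pos; auto).
  exists (mkposreal _ hm). intros s hs.
  change (Rabs (s - t) < Rmin d d1) in hs.
  assert (hs1 : Rabs (s - t) < d) by (pose proof (Rmin_l d d1); lra).
  assert (hs2 : Rabs (s - t) < d1) by (pose proof (Rmin_r d d1); lra).
  destruct (hk s hs1) as [k1 e1]. destruct (hk t) as [k2 e2].
  { unfold Rminus. rewrite Rplus_opp_r, Rabs_R0. auto. }
  specialize (H1 s hs2). rewrite e1, e2 in *. f_equal. f_equal. apply (int_close c); auto.
Qed.

Lemma lattice_closed (D : R -> R) (s c : R) : continuous D s -> 0 < c ->
  (forall d, 0 < d -> exists s', Rabs (s' - s) < d /\ exists k : Z, D s' = c * IZR k) ->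
  exists k : Z, D s = c * IZR k.
Proof.
  intros hc hc0 hdens.
  destruct (cont_eps D s hc (c/2)) as [d1 [hd1 H1]]. lra.
  destruct (hdens d1 hd1) as [s1 [hs1 [k1 e1]]].
  exists k1.
  apply NNPP. intro hne.
  set (e := Rabs (D s - c * IZR k1)).
  assert (he : 0 < e) by (apply Rabs_pos_lt; intro; apply hne; lra).
  destruct (cont_eps D s hc (Rmin (e/2) (c/2))) as [d2 [hd2 H2]].
  apply Rmin_pos; lra.
  destruct (hdens (Rmin d1 d2)) as [s2 [hs2 [k2 e2]]]. apply Rmin_pos; lra.
  assert (hs21 : Rabs (s2 - s) < d1) by (pose proof (Rmin_l d1 d2); lra).
  assert (hs22 : Rabs (s2 - s) < d2) by (pose proof (Rmin_r d1 d2); lra).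
  pose proof (H1 s1 hs1) as a1. pose proof (H2 s2 hs22) as a2.
  pose proof (Rmin_l (e/2) (c/2)). pose proof (Rmin_r (e/2) (c/2)).
  rewrite e1 in a1. rewrite e2 in a2.
  assert (hk : k1 = k2).
  { apply (int_close c); auto.
    replace (c * IZR k1 - c * IZR k2) with ((c * IZR k1 - D s) - (c * IZR k2 - D s)) by ring.
    eapply Rle_lt_trans. apply Rabs_triang. rewrite Rabs_Ropp.
    lra. }
  rewrite <- hk in a2. assert (Rabs (c * IZR k1 - D s) = e) by (unfold e; apply Rabs_minus_sym). lra.
Qed.

Lemma cont_sub (BT Q : R -> R) s : continuous BT s -> ex_derive Q s -> continuous (fun y => BT y - Q y) s.
Proof.
  intros h1 h2. apply (continuous_ext (fun y => minus (BT y) (Q y))). intro; reflexivity.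
  apply (@continuous_minus R_UniformSpace R_AbsRing R_NormedModule). exact h1.
  apply (@ex_derive_continuous R_AbsRing R_NormedModule). exact h2.
Qed.

Lemma deriv_zero_ball (F FT : R -> R) s d : 0 < d -> (forall s', Rabs (s' - s) < d -> F s' = 0) ->
  is_derive F s (FT s) -> FT s = 0.
Proof.
  intros hd hz hF.
  assert (h0 : is_derive F s 0).
  { apply (is_derive_ext_loc (fun _ => 0)). exists (mkposreal d hd). intros y hy.
    symmetry. apply hz. exact hy. apply (@is_derive_const R_AbsRing R_NormedModule). }
  rewrite <- (is_derive_unique _ _ _ hF). apply is_derive_unique. exact h0.
Qed.

Lemma density (F FT FTT : R -> R) :
  (forall s, is_derive F s (FT s)) -> (forall s, is_derive FT s (FTT s)) ->
  (forall s, F s = 0 -> FTT s <> 0) ->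
  forall s d, 0 < d -> exists s', Rabs (s' - s) < d /\ F s' <> 0.
Proof.
  intros hF hFT hnz s d hd. apply NNPP. intro hno.
  assert (hz : forall s', Rabs (s' - s) < d -> F s' = 0).
  { intros s' hs'. apply NNPP. intro hne. apply hno. exists s'. auto. }
  assert (hz2 : forall s', Rabs (s' - s) < d/2 -> FT s' = 0).
  { intros s' hs'. apply (deriv_zero_ball F FT s' (d/2)). lra.
    intros s'' hs''. apply hz.
    replace (s'' - s) with ((s'' - s') + (s' - s)) by ring.
    eapply Rle_lt_trans. apply Rabs_triang. lra. apply hF. }
  assert (FTT s = 0) by (apply (deriv_zero_ball FT FTT s (d/2)); auto; lra).
  apply (hnz s). apply hz. rewrite Rminus_diag, Rabs_R0. auto. auto.
Qed.

Lemma atan_swap (f g : R) : f <> 0 -> g <> 0 -> exists j : Z, atan (g / f) = PI/2 - atan (f / g) + IZR j * PI.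
Proof.
  intros hf hg. destruct (Rlt_or_le 0 (f / g)) as [hp|hn].
  - exists 0%Z. replace (g / f) with (/ (f / g)) by (field; auto). rewrite atan_inv by auto. simpl. ring.
  - assert (hn' : 0 < - (f / g)).
    { assert (f / g <> 0) by (unfold Rdiv; apply Rmult_integral_contrapositive_currified; auto; apply Rinv_neq_0_compat; auto). lra. }
    exists (-1)%Z. replace (g / f) with (- / (- (f / g))) by (field; auto).
    rewrite atan_opp, atan_inv by auto. rewrite atan_opp.
    rewrite (opp_IZR 1 : IZR (-1) = - IZR 1). simpl. field.
Qed.

Lemma Dgen (F G FT GT FTT BT : R -> R) (C0 r : R) :
  0 < r ->
  (forall s, is_derive F s (FT s)) -> (forall s, is_derive FT s (FTT s)) -> (forall s, is_derive G s (GT s)) ->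
  (forall s, 0 < F s * F s + G s * G s) ->
  (forall s, continuous BT s) ->
  (forall s, F s <> 0 -> exists k : Z, BT s = C0 + r * (atan (G s / F s) + IZR k * PI)) ->
  (forall s, F s = 0 -> FTT s <> 0) ->
  forall t, is_derive BT t (r * ThF (F t) (FT t) (G t) (GT t)).
Proof.
  intros hr hF hFT hG hW hBc hBk hnz t.
  assert (hc : 0 < r * PI) by (apply Rmult_lt_0_compat; auto; apply PI_RGT_0).
  assert (Fc : forall s, continuous F s) by (intro; apply (@ex_derive_continuous R_AbsRing R_NormedModule); eexists; apply hF).
  assert (Gc : forall s, continuous G s) by (intro; apply (@ex_derive_continuous R_AbsRing R_NormedModule); eexists; apply hG).
  destruct (Req_dec (G t) 0) as [hg0 | hg0].
  -
    assert (hf0 : F t <> 0) by (intro h; specialize (hW t); rewrite h, hg0 in hW; lra).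
    destruct (cont_eps F t (Fc t) (Rabs (F t))) as [d [hd Hd]]. apply Rabs_pos_lt; auto.
    assert (hFne : forall s, Rabs (s - t) < d -> F s <> 0).
    { intros s hs h. specialize (Hd s hs). rewrite h in Hd.
      rewrite Rminus_0_l, Rabs_Ropp in Hd. lra. }
    set (Q := fun s => C0 + r * atan (G s / F s)).
    assert (hQ : is_derive Q t (r * ThF (F t) (FT t) (G t) (GT t))).
    { unfold Q, ThF. pose proof (hF t) as h1. pose proof (hG t) as h2. auto_derive.
      repeat split; try (eexists; eassumption); auto.
      rewrite (Derive_of F t _ h1), (Derive_of G t _ h2).
      match goal with |- ?A = ?B => change (@eq R A B) end. field. split; auto.
      specialize (hW t). nra. }
    set (Dd := fun s => BT s - Q s).
    assert (hloc : locally t (fun s => Dd s = Dd t)).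
    { apply (loc_const Dd t (r * PI) d); auto.
      - apply cont_sub. apply hBc. eexists; exact hQ.
      - intros s hs. destruct (hBk s (hFne s hs)) as [k hk]. exists k. unfold Dd, Q. rewrite hk. ring. }
    apply (is_derive_ext_loc (fun s => Q s + Dd t)).
    + apply (filter_imp (fun s => Dd s = Dd t)); auto. intros s hs. change (Q s + Dd t = BT s). rewrite <- hs. unfold Dd. ring.
    + replace (r * ThF (F t) (FT t) (G t) (GT t)) with (r * ThF (F t) (FT t) (G t) (GT t) + 0) by ring.
      apply (is_derive_ext (fun s => Q s + (fun _ => Dd t) s)). reflexivity.
      apply (@is_derive_plus R_AbsRing R_NormedModule). exact hQ. apply (@is_derive_const R_AbsRing R_NormedModule).
  -
    destruct (cont_eps G t (Gc t) (Rabs (G t))) as [d [hd Hd]]. apply Rabs_pos_lt; auto.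
    assert (hGne : forall s, Rabs (s - t) < d -> G s <> 0).
    { intros s hs h. specialize (Hd s hs). rewrite h in Hd.
      rewrite Rminus_0_l, Rabs_Ropp in Hd. lra. }
    set (Q := fun s => C0 + r * (PI/2 - atan (F s / G s))).
    assert (hQd : forall s, G s <> 0 -> is_derive Q s (r * ThF (F s) (FT s) (G s) (GT s))).
    { intros s hgs. unfold Q, ThF. pose proof (hF s) as h1. pose proof (hG s) as h2. auto_derive.
      repeat split; try (eexists; eassumption); auto.
      rewrite (Derive_of F s _ h1), (Derive_of G s _ h2).
      match goal with |- ?A = ?B => change (@eq R A B) end. field. split; auto.
      specialize (hW s). nra. }
    set (Dd := fun s => BT s - Q s).
    assert (hDc : forall s, G s <> 0 -> continuous Dd s).
    { intros s hs. apply cont_sub. apply hBc. eexists; apply hQd; auto. }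
    assert (hlat1 : forall s, G s <> 0 -> F s <> 0 -> exists k : Z, Dd s = r * PI * IZR k).
    { intros s hgs hfs. destruct (hBk s hfs) as [k hk]. destruct (atan_swap (F s) (G s) hfs hgs) as [j hj].
      exists (k + j)%Z. unfold Dd, Q. rewrite hk, hj, plus_IZR. ring. }
    assert (hdens := density F FT FTT hF hFT hnz).
    assert (hlat : forall s, Rabs (s - t) < d -> exists k : Z, Dd s = r * PI * IZR k).
    { intros s hs. destruct (Req_dec (F s) 0) as [hfs | hfs].
      - apply (lattice_closed Dd s (r * PI)). apply hDc, hGne, hs. exact hc.
        intros e he. set (e' := Rmin e (d - Rabs (s - t))).
        assert (he' : 0 < e') by (apply Rmin_pos; lra).
        destruct (hdens s e' he') as [s' [hs' hfs']].
        assert (hs't : Rabs (s' - t) < d).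
        { replace (s' - t) with ((s' - s) + (s - t)) by ring. eapply Rle_lt_trans. apply Rabs_triang.
          pose proof (Rmin_r e (d - Rabs (s - t))). fold e' in H. lra. }
        exists s'. split. pose proof (Rmin_l e (d - Rabs (s - t))). fold e' in H. lra.
        apply hlat1; auto.
      - apply hlat1; auto. }
    assert (hloc : locally t (fun s => Dd s = Dd t)).
    { apply (loc_const Dd t (r * PI) d); auto. }
    apply (is_derive_ext_loc (fun s => Q s + Dd t)).
    + apply (filter_imp (fun s => Dd s = Dd t)); auto. intros s hs. change (Q s + Dd t = BT s). rewrite <- hs. unfold Dd. ring.
    + replace (r * ThF (F t) (FT t) (G t) (GT t)) with (r * ThF (F t) (FT t) (G t) (GT t) + 0) by ring.
      apply (is_derive_ext (fun s => Q s + (fun _ => Dd t) s)). reflexivity.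
      apply (@is_derive_plus R_AbsRing R_NormedModule). apply hQd; auto. apply (@is_derive_const R_AbsRing R_NormedModule).
Qed.


Section Breather.
Variables (a b m x1 x2 : R).
Hypotheses (Ha : a <> 0) (Hb : b <> 0) (Hm : m <> 0) (HD : Dnv a b m > 0).

Definition pv t x := a * y1 a b x1 t (x - 3 * m ^ 2 * t).
Definition qv t x := b * y2 a b x2 t (x - 3 * m ^ 2 * t).
Definition Sv := sqrt (a ^ 2 + b ^ 2).
Definition dv := sqrt (Dnv a b m).
Definition rv := sqrt 2.
Definition kap := 2 * a * Sv * dv ^ 2.
Definition ev (J : R -> R -> R -> R -> R -> R -> R -> R -> R -> R -> R) (t x : R) : R :=
  J a b m rv Sv dv (sin (pv t x)) (cos (pv t x)) (exp (qv t x)) (exp (- qv t x)) / kap.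


Definition A1c := a * (a ^ 2 - 3 * b ^ 2 - 3 * m ^ 2).
Definition A2c := b * (3 * a ^ 2 - b ^ 2 - 3 * m ^ 2).
Definition P0 t := a * ((a ^ 2 - 3 * b ^ 2 - 3 * m ^ 2) * t + x1).
Definition Q0 t := b * ((3 * a ^ 2 - b ^ 2 - 3 * m ^ 2) * t + x2).

Lemma pv_x t x : pv t x = a * x + P0 t.
Proof. unfold pv, P0, y1, delta_. ring. Qed.
Lemma qv_x t x : qv t x = b * x + Q0 t.
Proof. unfold qv, Q0, y2, gamma_. ring. Qed.
Lemma pv_t t x : pv t x = A1c * t + a * (x + x1).
Proof. unfold pv, A1c, y1, delta_. ring. Qed.
Lemma qv_t t x : qv t x = A2c * t + b * (x + x2).
Proof. unfold qv, A2c, y2, gamma_. ring. Qed.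

Ltac rring := match goal with |- ?A = ?B => change (@eq R A B) end; unfold Rdiv; ring.

Ltac dx_tac J Jx :=
  let t := fresh "t" in let x := fresh "x" in intros t x;
  apply (is_derive_ext (fun y => J a b m rv Sv dv (sin (a*y+P0 t)) (cos (a*y+P0 t)) (exp (b*y+Q0 t)) (exp (-(b*y+Q0 t))) / kap));
  [ intro; unfold ev; rewrite pv_x, qv_x; reflexivity | ];
  unfold ev; rewrite pv_x, qv_x;
  generalize (P0 t) (Q0 t); intros p0 q0;
  unfold J, Jx; auto_derive; [ tauto | rring ].

Ltac dt_tac J Jx :=
  let t := fresh "t" in let x := fresh "x" in intros t x;
  apply (is_derive_ext (fun s => J a b m rv Sv dv (sin (A1c*s+a*(x+x1))) (cos (A1c*s+a*(x+x1))) (exp (A2c*s+b*(x+x2))) (exp (-(A2c*s+b*(x+x2)))) / kap));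
  [ intro; unfold ev; rewrite pv_t, qv_t; reflexivity | ];
  unfold ev; rewrite pv_t, qv_t;
  generalize (a*(x+x1)) (b*(x+x2)); intros p0 q0;
  unfold J, Jx; auto_derive; [ tauto | unfold A1c, A2c; rring ].

Lemma dx_f : forall t x, is_derive (fun y => ev Jf t y) x (ev Jfx t x). Proof. dx_tac Jf Jfx. Qed.
Lemma dx_fx : forall t x, is_derive (fun y => ev Jfx t y) x (ev Jfxx t x). Proof. dx_tac Jfx Jfxx. Qed.
Lemma dx_g : forall t x, is_derive (fun y => ev Jg t y) x (ev Jgx t x). Proof. dx_tac Jg Jgx. Qed.
Lemma dx_gx : forall t x, is_derive (fun y => ev Jgx t y) x (ev Jgxx t x). Proof. dx_tac Jgx Jgxx. Qed.
Lemma dt_f : forall t x, is_derive (fun s => ev Jf s x) t (ev Jft t x). Proof. dt_tac Jf Jft. Qed.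
Lemma dt_fx : forall t x, is_derive (fun s => ev Jfx s x) t (ev Jfxt t x). Proof. dt_tac Jfx Jfxt. Qed.
Lemma dt_fxx : forall t x, is_derive (fun s => ev Jfxx s x) t (ev Jfxxt t x). Proof. dt_tac Jfxx Jfxxt. Qed.
Lemma dt_ft : forall t x, is_derive (fun s => ev Jft s x) t (ev Jftt t x). Proof. dt_tac Jft Jftt. Qed.
Lemma dt_g : forall t x, is_derive (fun s => ev Jg s x) t (ev Jgt t x). Proof. dt_tac Jg Jgt. Qed.
Lemma dt_gx : forall t x, is_derive (fun s => ev Jgx s x) t (ev Jgxt t x). Proof. dt_tac Jgx Jgxt. Qed.
Lemma dt_gxx : forall t x, is_derive (fun s => ev Jgxx s x) t (ev Jgxxt t x). Proof. dt_tac Jgxx Jgxxt. Qed.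

Lemma Sv_pos : 0 < Sv.
Proof. unfold Sv. apply sqrt_lt_R0. assert (0 < a^2) by (apply pow2_gt_0; auto). nra. Qed.
Lemma dv_pos : 0 < dv.
Proof. unfold dv. apply sqrt_lt_R0. lra. Qed.
Lemma Sv2 : Sv ^ 2 = a ^ 2 + b ^ 2.
Proof. unfold Sv. rewrite pow2_sqrt; auto. nra. Qed.
Lemma dv2 : dv ^ 2 = a ^ 2 + b ^ 2 - 2 * m ^ 2.
Proof. unfold dv. rewrite pow2_sqrt; [ unfold Dnv; ring | lra ]. Qed.
Lemma dv2' : dv ^ 2 = Dnv a b m.
Proof. unfold dv. rewrite pow2_sqrt; lra. Qed.
Lemma rv2 : rv ^ 2 = 2.
Proof. unfold rv. rewrite pow2_sqrt; lra. Qed.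
Lemma kap_nz : kap <> 0.
Proof. unfold kap. pose proof Sv_pos. pose proof dv_pos. assert (0 < dv^2) by (apply pow_lt; lra).
  repeat apply Rmult_integral_contrapositive_currified; lra. Qed.
Lemma sc1 t x : sin (pv t x) ^ 2 = 1 - cos (pv t x) ^ 2.
Proof. pose proof (sin2_cos2 (pv t x)). unfold Rsqr in H. nra. Qed.
Lemma ee1 t x : exp (qv t x) * exp (- qv t x) = 1.
Proof. rewrite <- exp_plus. replace (qv t x + - qv t x) with 0 by ring. apply exp_0. Qed.

Lemma ffun_ev t x : ffun a b m x1 x2 t x = ev Jf t x.
Proof.
  unfold ffun, Fmu, cosh. fold (pv t x). fold (qv t x). fold Sv. fold dv. fold rv.
  unfold ev, Jf, kap. pose proof Sv_pos. pose proof dv_pos. field. repeat split; lra.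
Qed.
Lemma gfun_ev t x : gfun a b m x1 x2 t x = ev Jg t x.
Proof.
  unfold gfun, Gmu. fold (pv t x). fold (qv t x). fold Sv. fold dv. fold rv.
  rewrite <- dv2'. unfold ev, Jg, kap. pose proof Sv_pos. pose proof dv_pos. field. repeat split; lra.
Qed.

Lemma nonsing_raw (s c E Ei : R) : s^2 = 1 - c^2 -> E * Ei = 1 -> 0 < E ->
  Jf a b m rv Sv dv s c E Ei = 0 -> Jg a b m rv Sv dv s c E Ei = 0 -> False.
Proof.
  intros hs hE hEp hf hg.
  pose proof Sv_pos as HS. pose proof dv_pos as Hd. pose proof rv2 as hr.
  set (X := Sv^2*dv^2*(E+Ei)). set (Y := 4*m^2*b^2*E).
  assert (H1 : Sv * (a * (X + Y - 2*m*rv*b*c*Sv*dv)) = Sv^2 * Jf a b m rv Sv dv s c E Ei - m*rv*b*Jg a b m rv Sv dv s c E Ei).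
  { unfold X, Y, Jf, Jg. ring [hr]. }
  rewrite hf, hg in H1.
  assert (H2 : X + Y = 2*m*rv*b*c*Sv*dv).
  { assert (a * (X + Y - 2*m*rv*b*c*Sv*dv) = 0).
    { apply (Rmult_eq_reg_l Sv); [ | lra]. rewrite H1. ring. }
    apply Rmult_integral in H. destruct H; [contradiction | lra]. }
  assert (H3 : (X+Y)^2 = 8*(m^2*b^2*Sv^2*dv^2)*c^2).
  { rewrite H2. ring [hr]. }
  assert (Hc : c^2 <= 1) by nra.
  assert (HK : 0 < m^2*b^2*Sv^2*dv^2).
  { assert (0 < m^2) by (apply pow2_gt_0; auto). assert (0 < b^2) by (apply pow2_gt_0; auto).
    assert (0 < Sv^2) by (apply pow2_gt_0; lra). assert (0 < dv^2) by (apply pow2_gt_0; lra).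
    apply Rmult_lt_0_compat; [apply Rmult_lt_0_compat; [apply Rmult_lt_0_compat|]|]; assumption. }
  assert (H4 : 4*X*Y = 16*(m^2*b^2*Sv^2*dv^2)*(E^2+1)).
  { transitivity (16*(m^2*b^2*Sv^2*dv^2)*(E*E + E*Ei)). unfold X, Y. ring. rewrite hE. ring. }
  assert (H5 : 4*X*Y <= (X+Y)^2) by (replace ((X+Y)^2) with ((X-Y)^2 + 4*X*Y) by ring; pose proof (pow2_ge_0 (X-Y)); lra).
  assert (0 <= E^2) by nra.
  nra.
Qed.

Lemma W_pos t x : 0 < ev Jf t x ^ 2 + ev Jg t x ^ 2.
Proof.
  destruct (Req_dec (ev Jf t x) 0) as [h1|h1].
  - destruct (Req_dec (ev Jg t x) 0) as [h2|h2].
    + exfalso. pose proof kap_nz.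
      apply (nonsing_raw (sin (pv t x)) (cos (pv t x)) (exp (qv t x)) (exp (- qv t x))).
      apply sc1. apply ee1. apply exp_pos.
      unfold ev in h1. apply (Rmult_eq_reg_r (/ kap)). rewrite Rmult_0_l. exact h1. apply Rinv_neq_0_compat; auto.
      unfold ev in h2. apply (Rmult_eq_reg_r (/ kap)). rewrite Rmult_0_l. exact h2. apply Rinv_neq_0_compat; auto.
    + assert (0 < ev Jg t x ^ 2) by (apply pow2_gt_0; auto). nra.
  - assert (0 < ev Jf t x ^ 2) by (apply pow2_gt_0; auto). nra.
Qed.

Lemma W_pos' t x : 0 < ev Jf t x * ev Jf t x + ev Jg t x * ev Jg t x.
Proof. pose proof (W_pos t x). nra. Qed.

Lemma Dg_eq t x : Derive (fun y => gfun a b m x1 x2 t y) x = ev Jgx t x.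
Proof. rewrite (Derive_ext _ (fun y => ev Jg t y)) by (intro; apply gfun_ev). apply is_derive_unique, dx_g. Qed.
Lemma Df_eq t x : Derive (fun y => ffun a b m x1 x2 t y) x = ev Jfx t x.
Proof. rewrite (Derive_ext _ (fun y => ev Jf t y)) by (intro; apply ffun_ev). apply is_derive_unique, dx_f. Qed.

Lemma Bnv_eq t x : Bnv a b m x1 x2 t x = BF m rv (ev Jf t x) (ev Jfx t x) (ev Jg t x) (ev Jgx t x).
Proof. unfold Bnv, BF. rewrite Dg_eq, Df_eq, ffun_ev, gfun_ev. reflexivity. Qed.

Lemma Bx_is t x : is_derive (fun y => Bnv a b m x1 x2 t y) x
  (BxF rv (ev Jf t x) (ev Jfx t x) (ev Jfxx t x) (ev Jg t x) (ev Jgx t x) (ev Jgxx t x)).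
Proof.
  apply (is_derive_ext (fun y => BF m rv (ev Jf t y) (ev Jfx t y) (ev Jg t y) (ev Jgx t y))).
  { intro y. symmetry. apply Bnv_eq. }
  apply (gen_dx (fun y => ev Jf t y) (fun y => ev Jfx t y) (fun y => ev Jfxx t y)
                (fun y => ev Jg t y) (fun y => ev Jgx t y) (fun y => ev Jgxx t y)).
  apply dx_f. apply dx_fx. apply dx_g. apply dx_gx. apply W_pos'.
Qed.

Lemma Bxt_eq t x : Derive (fun s => Derive (fun y => Bnv a b m x1 x2 s y) x) t =
  BxtF rv (ev Jf t x) (ev Jfx t x) (ev Jfxx t x) (ev Jft t x) (ev Jfxt t x) (ev Jfxxt t x)
          (ev Jg t x) (ev Jgx t x) (ev Jgxx t x) (ev Jgt t x) (ev Jgxt t x) (ev Jgxxt t x).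
Proof.
  rewrite (Derive_ext _ (fun s => BxF rv (ev Jf s x) (ev Jfx s x) (ev Jfxx s x) (ev Jg s x) (ev Jgx s x) (ev Jgxx s x))).
  2:{ intro s. apply is_derive_unique, Bx_is. }
  apply is_derive_unique.
  apply (gen_dt (fun s => ev Jf s x) (fun s => ev Jfx s x) (fun s => ev Jfxx s x)
                (fun s => ev Jft s x) (fun s => ev Jfxt s x) (fun s => ev Jfxxt s x)
                (fun s => ev Jg s x) (fun s => ev Jgx s x) (fun s => ev Jgxx s x)
                (fun s => ev Jgt s x) (fun s => ev Jgxt s x) (fun s => ev Jgxxt s x)).
  apply dt_f. apply dt_fx. apply dt_fxx. apply dt_g. apply dt_gx. apply dt_gxx. apply W_pos'.
Qed.

Definition Hv t x := HF (ev Jf t x) (ev Jfx t x) (ev Jg t x) (ev Jgx t x).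

Lemma Hx_is t x : is_derive (fun y => Hv t y) x (HxF (ev Jf t x) (ev Jfx t x) (ev Jfxx t x) (ev Jg t x) (ev Jgx t x) (ev Jgxx t x)).
Proof.
  apply (gen_Hx (fun y => ev Jf t y) (fun y => ev Jfx t y) (fun y => ev Jfxx t y)
                (fun y => ev Jg t y) (fun y => ev Jgx t y) (fun y => ev Jgxx t y)).
  apply dx_f. apply dx_fx. apply dx_g. apply dx_gx. apply W_pos'.
Qed.

Lemma Ht_is t x : is_derive (fun s => Hv s x) t (HtF (ev Jf t x) (ev Jfx t x) (ev Jft t x) (ev Jfxt t x) (ev Jg t x) (ev Jgx t x) (ev Jgt t x) (ev Jgxt t x)).
Proof.
  apply (gen_Ht (fun s => ev Jf s x) (fun s => ev Jfx s x) (fun s => ev Jft s x) (fun s => ev Jfxt s x)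
                (fun s => ev Jg s x) (fun s => ev Jgx s x) (fun s => ev Jgt s x) (fun s => ev Jgxt s x)).
  apply dt_f. apply dt_fx. apply dt_g. apply dt_gx. apply W_pos'.
Qed.

Lemma I1_ev t x : 2 * HxF (ev Jf t x) (ev Jfx t x) (ev Jfxx t x) (ev Jg t x) (ev Jgx t x) (ev Jgxx t x)
  = Bnv a b m x1 x2 t x ^ 2 - m ^ 2.
Proof.
  rewrite Bnv_eq. apply I1_alg. apply rv2. pose proof (W_pos' t x). lra.
  unfold ev. rewrite I1poly_scale by apply kap_nz.
  rewrite I1_ok. unfold Rdiv; ring.
  apply rv2. apply Sv2. apply dv2. apply sc1. apply ee1.
Qed.

Lemma P_ev t x : Ppoly rv m (C1v a b m) (C2v a b m) (ev Jf t x) (ev Jfx t x) (ev Jfxx t x) (ev Jft t x) (ev Jfxt t x) (ev Jfxxt t x)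
          (ev Jg t x) (ev Jgx t x) (ev Jgxx t x) (ev Jgt t x) (ev Jgxt t x) (ev Jgxxt t x) = 0.
Proof.
  unfold ev. rewrite Ppoly_scale by apply kap_nz.
  rewrite P_ok. unfold Rdiv; ring.
  apply rv2. apply Sv2. apply dv2. apply sc1. apply ee1.
Qed.

Lemma bnd2 (u v X Y : R) : Rabs u <= 1 -> Rabs v <= 1 -> Rabs (X*u + Y*v) <= Rabs X + Rabs Y.
Proof.
  intros hu hv. eapply Rle_trans. apply Rabs_triang. rewrite !Rabs_mult.
  assert (0 <= Rabs X) by apply Rabs_pos. assert (0 <= Rabs Y) by apply Rabs_pos.
  assert (0 <= Rabs u) by apply Rabs_pos. assert (0 <= Rabs v) by apply Rabs_pos. nra.
Qed.
Lemma bnd3 (u v w X Y Z : R) : Rabs u <= 1 -> Rabs v <= 1 -> Rabs w <= 1 ->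
  Rabs (X*u + Y*v + Z*w) <= Rabs X + Rabs Y + Rabs Z.
Proof.
  intros hu hv hw. eapply Rle_trans. apply Rabs_triang.
  pose proof (bnd2 u v X Y hu hv). rewrite Rabs_mult.
  assert (0 <= Rabs Z) by apply Rabs_pos. assert (0 <= Rabs w) by apply Rabs_pos. nra.
Qed.

Lemma ratio_bound (A1 B1 A2 B2 k0 K5 K2 K3 K4 u : R) :
  0 < k0 -> k0 <= Rabs A1 -> Rabs A1 <= K5 -> Rabs A2 <= K3 -> Rabs B1 <= K2 * u -> Rabs B2 <= K4 * u ->
  Rabs (2 * (A1*B1 + A2*B2) / (A1*A1 + A2*A2)) <= 2 * ((K5*K2 + K3*K4) * u) / (k0*k0).
Proof.
  intros h0 h1 h2 h3 h4 h5.
  assert (e1 : A1*A1 = Rabs A1 * Rabs A1) by (rewrite <- Rabs_mult; symmetry; apply Rabs_pos_eq; nra).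
  assert (HA1 : k0*k0 <= A1*A1) by (rewrite e1; apply Rmult_le_compat; lra).
  assert (HDD : k0*k0 <= A1*A1 + A2*A2) by nra.
  assert (Hk : 0 < k0*k0) by nra.
  set (N := A1*B1 + A2*B2).
  assert (HN : Rabs N <= (K5*K2 + K3*K4) * u).
  { unfold N. eapply Rle_trans. apply Rabs_triang. rewrite !Rabs_mult.
    pose proof (Rabs_pos A1). pose proof (Rabs_pos A2). pose proof (Rabs_pos B1). pose proof (Rabs_pos B2).
    assert (Rabs A1 * Rabs B1 <= K5 * (K2 * u)) by (apply Rmult_le_compat; lra).
    assert (Rabs A2 * Rabs B2 <= K3 * (K4 * u)) by (apply Rmult_le_compat; lra).
    nra. }
  unfold Rdiv. rewrite !Rabs_mult, Rabs_inv, (Rabs_pos_eq 2) by lra.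
  rewrite (Rabs_pos_eq (A1*A1+A2*A2)) by nra.
  pose proof (Rabs_pos N).
  apply Rle_trans with (2 * Rabs N * / (k0*k0)).
  - apply Rmult_le_compat_l. nra. apply Rinv_le_contravar; lra.
  - apply Rmult_le_compat_r. left; apply Rinv_0_lt_compat; lra. lra.
Qed.

Lemma lim_from_bound (Phi u : R -> R) (L d0 C : R) : 0 < d0 ->
  (forall y, u y <= d0 -> Rabs (Phi y - L) <= C * u y) ->
  (forall eps, 0 < eps -> exists M, forall y, y < M -> u y < eps) ->
  (forall y, 0 < u y) ->
  filterlim Phi (Rbar_locally m_infty) (locally L).
Proof.
  intros hd hb hu hpos. apply filterlim_locally. intro eps.
  set (e' := Rmin d0 (eps / (Rabs C + 1))).
  assert (he' : 0 < e').
  { unfold e'. apply Rmin_pos; auto. apply Rdiv_lt_0_compat. apply cond_pos. pose proof (Rabs_pos C); lra. }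
  destruct (hu e' he') as [M HM]. simpl. exists M. intros y hy.
  specialize (HM y hy). pose proof (hpos y).
  assert (h1 : u y <= d0) by (pose proof (Rmin_l d0 (eps / (Rabs C + 1))); fold e' in H0; lra).
  specialize (hb y h1).
  unfold ball; simpl; unfold AbsRing_ball; simpl; unfold abs, minus, plus, opp; simpl.
  change (Rabs (Phi y - L) < eps).
  assert (h2 : u y < eps / (Rabs C + 1)) by (pose proof (Rmin_r d0 (eps / (Rabs C + 1))); fold e' in H0; lra).
  assert (h3 : C * u y <= Rabs C * u y) by (apply Rmult_le_compat_r; [lra | apply Rle_abs]).
  assert (h4 : Rabs C * u y < eps).
  { apply Rle_lt_trans with ((Rabs C + 1) * u y). pose proof (Rabs_pos C). nra.
    assert (hh : (Rabs C + 1) * (eps / (Rabs C + 1)) = eps) by (field; pose proof (Rabs_pos C); lra).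
    rewrite <- hh. apply Rmult_lt_compat_l. pose proof (Rabs_pos C); lra. exact h2. }
  lra.
Qed.

Lemma abs_sin_le x : Rabs (sin x) <= 1.
Proof. pose proof (SIN_bound x). apply Rabs_le. lra. Qed.
Lemma abs_cos_le x : Rabs (cos x) <= 1.
Proof. pose proof (COS_bound x). apply Rabs_le. lra. Qed.

Lemma Hv_raw t y : Hv t y = HF (Jf a b m rv Sv dv (sin (pv t y)) (cos (pv t y)) (exp (qv t y)) (exp (- qv t y)))
  (Jfx a b m rv Sv dv (sin (pv t y)) (cos (pv t y)) (exp (qv t y)) (exp (- qv t y)))
  (Jg a b m rv Sv dv (sin (pv t y)) (cos (pv t y)) (exp (qv t y)) (exp (- qv t y)))
  (Jgx a b m rv Sv dv (sin (pv t y)) (cos (pv t y)) (exp (qv t y)) (exp (- qv t y))).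
Proof.
  pose proof (W_pos' t y) as hW. pose proof kap_nz as hk.
  unfold Hv, HF in *. unfold ev in *.
  set (f := Jf a b m rv Sv dv (sin (pv t y)) (cos (pv t y)) (exp (qv t y)) (exp (- qv t y))) in *.
  set (g := Jg a b m rv Sv dv (sin (pv t y)) (cos (pv t y)) (exp (qv t y)) (exp (- qv t y))) in *.
  assert (f*f+g*g <> 0).
  { intro h. assert (f/kap*(f/kap)+g/kap*(g/kap) = (f*f+g*g)/(kap*kap)) by (field; auto). rewrite h in H. 
    unfold Rdiv in H. rewrite Rmult_0_l in H. lra. }
  field. auto.
Qed.

Definition c0 := a * Sv * dv ^ 2.
Definition K1 := Rabs (2*b^2*m*rv*dv) + Rabs c0 + Rabs (2*a*b*m*rv*dv).
Definition k0 := Rabs c0 / 2.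
Definition K5 := Rabs c0 + K1.
Definition dlt := Rmin 1 (Rabs c0 / (2 * (K1 + 1))).

Lemma c0_nz : c0 <> 0.
Proof. unfold c0. pose proof Sv_pos. pose proof dv_pos. assert (0 < dv^2) by (apply pow_lt; lra).
  repeat apply Rmult_integral_contrapositive_currified; lra. Qed.
Lemma K1_pos : 0 <= K1.
Proof. unfold K1. pose proof (Rabs_pos (2*b^2*m*rv*dv)). pose proof (Rabs_pos c0). pose proof (Rabs_pos (2*a*b*m*rv*dv)). lra. Qed.
Lemma dlt_pos : 0 < dlt.
Proof. unfold dlt. apply Rmin_pos. lra. apply Rdiv_lt_0_compat. apply Rabs_pos_lt, c0_nz. pose proof K1_pos. lra. Qed.

Lemma A1_bounds (u X : R) : 0 < u -> u <= dlt -> Rabs (X - c0) <= K1 * u -> k0 <= Rabs X /\ Rabs X <= K5.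
Proof.
  intros hu hd hX. pose proof K1_pos. pose proof (Rabs_pos_lt _ c0_nz) as hc.
  assert (hd1 : u <= 1) by (pose proof (Rmin_l 1 (Rabs c0 / (2 * (K1 + 1)))); fold dlt in *; lra).
  assert (hd2 : u <= Rabs c0 / (2 * (K1 + 1))) by (pose proof (Rmin_r 1 (Rabs c0 / (2 * (K1 + 1)))); fold dlt in *; lra).
  assert (hK : K1 * u <= Rabs c0 / 2).
  { apply Rle_trans with (K1 * (Rabs c0 / (2 * (K1 + 1)))). apply Rmult_le_compat_l; lra.
    apply Rle_trans with ((K1+1) * (Rabs c0 / (2 * (K1 + 1)))). apply Rmult_le_compat_r. 
    apply Rlt_le, Rdiv_lt_0_compat; lra. lra. right. field. lra. }
  pose proof (Rabs_triang_inv c0 X). pose proof (Rabs_triang_inv X c0).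
  rewrite Rabs_minus_sym in H0.
  unfold k0, K5. split. lra. nra.
Qed.

Definition K2p := Rabs (2*a*b*Sv*dv^2) + Rabs (2*b*m*rv*dv*(a^2+b^2)).
Definition K3p := Rabs (2*b*Sv^2*dv) + Rabs (-(2*a*b*m*rv*Sv)).
Definition K4p := Rabs (2*b*Sv^2*dv*a) + Rabs (2*b*Sv^2*dv*b) + Rabs (-(4*a*b^2*m*rv*Sv)).

Lemma raw_bound_pos (s c E Ei : R) : s^2 = 1 - c^2 -> E * Ei = 1 -> 0 < E -> E <= dlt ->
  Rabs (HF (Jf a b m rv Sv dv s c E Ei) (Jfx a b m rv Sv dv s c E Ei) (Jg a b m rv Sv dv s c E Ei) (Jgx a b m rv Sv dv s c E Ei) - - (2 * b))
  <= 2 * ((K5*K2p + K3p*K4p) * E) / (k0*k0).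
Proof.
  intros hs hE hp hd.
  assert (hs1 : Rabs s <= 1) by (apply Rabs_le; nra).
  assert (hc1 : Rabs c <= 1) by (apply Rabs_le; nra).
  assert (hd1 : E <= 1) by (pose proof (Rmin_l 1 (Rabs c0 / (2 * (K1 + 1)))); fold dlt in *; lra).
  assert (hE1 : Rabs E <= 1) by (apply Rabs_le; lra).
  set (f := Jf a b m rv Sv dv s c E Ei). set (fx := Jfx a b m rv Sv dv s c E Ei).
  set (g := Jg a b m rv Sv dv s c E Ei). set (gx := Jgx a b m rv Sv dv s c E Ei).
  assert (hW : f*f+g*g <> 0).
  { intro h. apply (nonsing_raw s c E Ei hs hE hp); fold f g; nra. }
  assert (eq : HF f fx g gx - - (2*b) = 2 * ((E*f)*(E*(fx+b*f)) + (E*g)*(E*(gx+b*g))) / ((E*f)*(E*f) + (E*g)*(E*g))).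
  { unfold HF. field. split; auto. intro h. apply hW. apply (Rmult_eq_reg_l (E*E)). rewrite Rmult_0_r. rewrite <- h. ring. nra. }
  rewrite eq.
  assert (eA1 : E*f = c0 + E*((2*b^2*m*rv*dv)*s + c0*E + (-(2*a*b*m*rv*dv))*c)).
  { unfold f, Jf, c0. ring [hE]. }
  assert (eB1 : E*(fx+b*f) = E*((2*a*b*Sv*dv^2)*E + (2*b*m*rv*dv*(a^2+b^2))*s)).
  { unfold f, fx, Jf, Jfx. ring. }
  assert (eA2 : E*g = E*((2*b*Sv^2*dv)*s + (-(2*a*b*m*rv*Sv))*E)).
  { unfold g, Jg. ring. }
  assert (eB2 : E*(gx+b*g) = E*((2*b*Sv^2*dv*a)*c + (2*b*Sv^2*dv*b)*s + (-(4*a*b^2*m*rv*Sv))*E)).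
  { unfold g, gx, Jg, Jgx. ring. }
  assert (bA1 : Rabs (E*f - c0) <= K1 * E).
  { rewrite eA1. replace (c0 + _ - c0) with (E*((2*b^2*m*rv*dv)*s + c0*E + (-(2*a*b*m*rv*dv))*c)) by ring.
    rewrite Rabs_mult, (Rabs_pos_eq E) by lra. rewrite Rmult_comm. apply Rmult_le_compat_r. lra.
    unfold K1. rewrite <- (Rabs_Ropp (2*a*b*m*rv*dv)). apply bnd3; auto. }
  destruct (A1_bounds E (E*f) hp hd bA1) as [l1 l2].
  apply ratio_bound; auto.
  - unfold k0. apply Rdiv_lt_0_compat. apply Rabs_pos_lt, c0_nz. lra.
  - rewrite eA2, Rabs_mult, (Rabs_pos_eq E) by lra. unfold K3p.
    pose proof (bnd2 s E (2*b*Sv^2*dv) (-(2*a*b*m*rv*Sv)) hs1 hE1).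
    pose proof (Rabs_pos ((2*b*Sv^2*dv)*s + (-(2*a*b*m*rv*Sv))*E)). nra.
  - rewrite eB1, Rabs_mult, (Rabs_pos_eq E) by lra. rewrite Rmult_comm. apply Rmult_le_compat_r. lra.
    unfold K2p. rewrite Rplus_comm. rewrite (Rplus_comm (Rabs _)). apply bnd2; auto.
  - rewrite eB2, Rabs_mult, (Rabs_pos_eq E) by lra. rewrite Rmult_comm. apply Rmult_le_compat_r. lra.
    unfold K4p. apply bnd3; auto.
Qed.

Definition K2n := Rabs (-(2*a*b*Sv*dv^2)) + Rabs (4*a*b^2*m*rv*dv) + Rabs (2*b*m*rv*dv*(a^2-b^2)).
Definition K3n := Rabs (2*b*Sv^2*dv) + Rabs (-(2*a*b*m*rv*Sv)).
Definition K4n := Rabs (2*a*b*Sv^2*dv) + Rabs (-(2*b^2*Sv^2*dv)).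

Lemma raw_bound_neg (s c E Ei : R) : s^2 = 1 - c^2 -> E * Ei = 1 -> 0 < Ei -> Ei <= dlt ->
  Rabs (HF (Jf a b m rv Sv dv s c E Ei) (Jfx a b m rv Sv dv s c E Ei) (Jg a b m rv Sv dv s c E Ei) (Jgx a b m rv Sv dv s c E Ei) - 2 * b)
  <= 2 * ((K5*K2n + K3n*K4n) * Ei) / (k0*k0).
Proof.
  intros hs hE hp hd.
  assert (hs1 : Rabs s <= 1) by (apply Rabs_le; nra).
  assert (hc1 : Rabs c <= 1) by (apply Rabs_le; nra).
  assert (hd1 : Ei <= 1) by (pose proof (Rmin_l 1 (Rabs c0 / (2 * (K1 + 1)))); fold dlt in *; lra).
  assert (hE1 : Rabs Ei <= 1) by (apply Rabs_le; lra).
  assert (hEp : 0 < E) by nra.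
  set (f := Jf a b m rv Sv dv s c E Ei). set (fx := Jfx a b m rv Sv dv s c E Ei).
  set (g := Jg a b m rv Sv dv s c E Ei). set (gx := Jgx a b m rv Sv dv s c E Ei).
  assert (hW : f*f+g*g <> 0).
  { intro h. apply (nonsing_raw s c E Ei hs hE hEp); fold f g; nra. }
  assert (eq : HF f fx g gx - 2*b = 2 * ((Ei*f)*(Ei*(fx-b*f)) + (Ei*g)*(Ei*(gx-b*g))) / ((Ei*f)*(Ei*f) + (Ei*g)*(Ei*g))).
  { unfold HF. field. split; auto. intro h. apply hW. apply (Rmult_eq_reg_l (Ei*Ei)). rewrite Rmult_0_r. rewrite <- h. ring. nra. }
  rewrite eq.
  assert (eA1 : Ei*f = c0 + Ei*((2*b^2*m*rv*dv)*s + c0*Ei + (-(2*a*b*m*rv*dv))*c)).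
  { unfold f, Jf, c0. ring [hE]. }
  assert (eB1 : Ei*(fx-b*f) = Ei*((-(2*a*b*Sv*dv^2))*Ei + (4*a*b^2*m*rv*dv)*c + (2*b*m*rv*dv*(a^2-b^2))*s)).
  { unfold f, fx, Jf, Jfx. ring. }
  assert (eA2 : Ei*g = (2*b*Sv^2*dv)*(Ei*s) + (-(2*a*b*m*rv*Sv))*1).
  { unfold g, Jg. ring [hE]. }
  assert (eB2 : Ei*(gx-b*g) = Ei*((2*a*b*Sv^2*dv)*c + (-(2*b^2*Sv^2*dv))*s)).
  { unfold g, gx, Jg, Jgx. ring. }
  assert (bA1 : Rabs (Ei*f - c0) <= K1 * Ei).
  { rewrite eA1. replace (c0 + _ - c0) with (Ei*((2*b^2*m*rv*dv)*s + c0*Ei + (-(2*a*b*m*rv*dv))*c)) by ring.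
    rewrite Rabs_mult, (Rabs_pos_eq Ei) by lra. rewrite Rmult_comm. apply Rmult_le_compat_r. lra.
    unfold K1. rewrite <- (Rabs_Ropp (2*a*b*m*rv*dv)). apply bnd3; auto. }
  destruct (A1_bounds Ei (Ei*f) hp hd bA1) as [l1 l2].
  apply ratio_bound; auto.
  - unfold k0. apply Rdiv_lt_0_compat. apply Rabs_pos_lt, c0_nz. lra.
  - rewrite eA2. unfold K3n. apply bnd2.
    rewrite Rabs_mult. pose proof (Rabs_pos Ei). pose proof (Rabs_pos s). nra.
    rewrite Rabs_R1. lra.
  - rewrite eB1, Rabs_mult, (Rabs_pos_eq Ei) by lra. rewrite Rmult_comm. apply Rmult_le_compat_r. lra.
    unfold K2n. apply bnd3; auto.
  - rewrite eB2, Rabs_mult, (Rabs_pos_eq Ei) by lra. rewrite Rmult_comm. apply Rmult_le_compat_r. lra.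
    unfold K4n. apply bnd2; auto.
Qed.

Lemma Hv_lim t : filterlim (fun y => Hv t y) (Rbar_locally m_infty) (locally (- 2 * Rabs b)).
Proof.
  destruct (Rlt_or_le 0 b) as [hb|hb].
  - rewrite Rabs_pos_eq by lra. replace (-2*b) with (- (2*b)) by ring.
    apply (lim_from_bound _ (fun y => exp (qv t y)) _ dlt (2 * (K5*K2p + K3p*K4p) / (k0*k0))).
    + apply dlt_pos.
    + intros y hy. rewrite Hv_raw.
      replace (2 * (K5 * K2p + K3p * K4p) / (k0 * k0) * exp (qv t y)) with
        (2 * ((K5*K2p + K3p*K4p) * exp (qv t y)) / (k0*k0)) by (unfold Rdiv; ring).
      apply raw_bound_pos; auto. apply sc1. apply ee1. apply exp_pos.
    + intros eps heps. exists ((ln eps - Q0 t) / b). intros y hy.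
      rewrite qv_x. rewrite <- (exp_ln eps heps). apply exp_increasing.
      apply (Rmult_lt_compat_l b) in hy; auto.
      replace (b * ((ln eps - Q0 t) / b)) with (ln eps - Q0 t) in hy by (field; lra). lra.
    + intro; apply exp_pos.
  - assert (hb' : b < 0) by (destruct hb; [lra | exfalso; auto]).
    rewrite Rabs_left by lra. replace (-2 * - b) with (2*b) by ring.
    apply (lim_from_bound _ (fun y => exp (- qv t y)) _ dlt (2 * (K5*K2n + K3n*K4n) / (k0*k0))).
    + apply dlt_pos.
    + intros y hy. rewrite Hv_raw.
      replace (2 * (K5 * K2n + K3n * K4n) / (k0 * k0) * exp (- qv t y)) with
        (2 * ((K5*K2n + K3n*K4n) * exp (- qv t y)) / (k0*k0)) by (unfold Rdiv; ring).
      apply raw_bound_neg; auto. apply sc1. apply ee1. apply exp_pos.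
    + intros eps heps. exists ((ln eps + Q0 t) / (- b)). intros y hy.
      rewrite qv_x. rewrite <- (exp_ln eps heps). apply exp_increasing.
      apply (Rmult_lt_compat_l (-b)) in hy; [ | lra].
      replace (- b * ((ln eps + Q0 t) / - b)) with (ln eps + Q0 t) in hy by (field; lra). lra.
    + intro; apply exp_pos.
Qed.

Lemma Bnv_ex_derive t y : ex_derive (fun z => Bnv a b m x1 x2 t z) y.
Proof. eexists. apply Bx_is. Qed.

Lemma Hv2_derive t y : is_derive (fun z => 2 * Hv t z) y (Bnv a b m x1 x2 t y ^ 2 - m ^ 2).
Proof.
  rewrite <- I1_ev. apply is_derive_scal. apply Hx_is.
Qed.

Lemma Mnv_eq t x : Mnv a b m x1 x2 t x = Hv t x + 2 * Rabs b.
Proof.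
  unfold Mnv.
  assert (HI : is_RInt_gen (fun s => Bnv a b m x1 x2 t s ^ 2 - m ^ 2) (Rbar_locally m_infty) (at_point x)
                 (2 * Hv t x - 2 * (- 2 * Rabs b))).
  { apply (is_RInt_gen_ext (Derive (fun y => 2 * Hv t y))).
    - apply filter_forall. intros _ y _. apply is_derive_unique, Hv2_derive.
    - apply is_RInt_gen_Derive.
      + apply filter_forall. intros _ y _. eexists. apply Hv2_derive.
      + apply filter_forall. intros _ y _.
        apply (continuous_ext (fun z => Bnv a b m x1 x2 t z ^ 2 - m ^ 2)).
        { intro z. symmetry. apply is_derive_unique, Hv2_derive. }
        apply (@ex_derive_continuous R_AbsRing R_NormedModule).
        assert (hB := Bnv_ex_derive t y).
        auto_derive. first [exact hB | split; [exact hB | exact I]].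
      + apply (filterlim_comp _ _ _ (fun y => Hv t y) (fun z => 2 * z) _ (locally (-2 * Rabs b))).
        apply Hv_lim.
        apply (@ex_derive_continuous R_AbsRing R_NormedModule (fun z => 2 * z)). auto_derive. exact I.
      + intros P HP. unfold filtermap, at_point. apply locally_singleton. exact HP.
  }
  rewrite (is_RInt_gen_unique _ _ HI). field.
Qed.

Lemma Mt_eq t x : Derive (fun s => Mnv a b m x1 x2 s x) t =
  HtF (ev Jf t x) (ev Jfx t x) (ev Jft t x) (ev Jfxt t x) (ev Jg t x) (ev Jgx t x) (ev Jgt t x) (ev Jgxt t x).
Proof.
  rewrite (Derive_ext _ (fun s => Hv s x + 2 * Rabs b)) by (intro; apply Mnv_eq).
  apply is_derive_unique. pose proof (Ht_is t x) as h.
  auto_derive. eexists; exact h.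
  rewrite (Derive_of (fun s => Hv s x) t _ h). ring.
Qed.

Lemma ftt_nz t x : ev Jf t x = 0 -> ev Jftt t x <> 0.
Proof.
  intros h0 h1. pose proof kap_nz as hk. pose proof Sv_pos. pose proof dv_pos.
  set (sn := sin (pv t x)). set (cs := cos (pv t x)). set (E := exp (qv t x)). set (Ei := exp (- qv t x)).
  assert (hid : Jftt a b m rv Sv dv sn cs E Ei + A1c^2 * Jf a b m rv Sv dv sn cs E Ei
     = (A2c^2 + A1c^2) * (a * Sv * dv^2) * (E + Ei)).
  { unfold Jftt, Jf, A1c, A2c. ring. }
  unfold ev in h0, h1. fold sn cs E Ei in h0, h1.
  assert (e0 : Jf a b m rv Sv dv sn cs E Ei = 0).
  { apply (Rmult_eq_reg_r (/ kap)). rewrite Rmult_0_l. exact h0. apply Rinv_neq_0_compat; auto. }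
  assert (e1 : Jftt a b m rv Sv dv sn cs E Ei = 0).
  { apply (Rmult_eq_reg_r (/ kap)). rewrite Rmult_0_l. exact h1. apply Rinv_neq_0_compat; auto. }
  rewrite e0, e1 in hid.
  assert (hE : 0 < E + Ei) by (unfold E, Ei; pose proof (exp_pos (qv t x)); pose proof (exp_pos (- qv t x)); lra).
  assert (hA : 0 < A2c^2 + A1c^2).
  { unfold A1c, A2c. assert (0 < a^2) by (apply pow2_gt_0; auto). assert (0 < b^2) by (apply pow2_gt_0; auto).
    destruct (Req_dec (a^2 - 3*b^2 - 3*m^2) 0) as [z|z].
    - assert (3*a^2 - b^2 - 3*m^2 <> 0) by lra.
      assert (0 < (b * (3 * a ^ 2 - b ^ 2 - 3 * m ^ 2))^2) by (apply pow2_gt_0; apply Rmult_integral_contrapositive_currified; auto).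
      pose proof (pow2_ge_0 (a * (a ^ 2 - 3 * b ^ 2 - 3 * m ^ 2))). lra.
    - assert (0 < (a * (a ^ 2 - 3 * b ^ 2 - 3 * m ^ 2))^2) by (apply pow2_gt_0; apply Rmult_integral_contrapositive_currified; auto).
      pose proof (pow2_ge_0 (b * (3 * a ^ 2 - b ^ 2 - 3 * m ^ 2))). lra. }
  assert (hc : a * Sv * dv^2 <> 0) by (fold c0; apply c0_nz).
  assert ((A2c^2 + A1c^2) * (a * Sv * dv^2) * (E + Ei) <> 0).
  { apply Rmult_integral_contrapositive_currified. apply Rmult_integral_contrapositive_currified; lra. lra. }
  apply H1. rewrite <- hid. ring.
Qed.

Lemma Btd (Bt : R -> R -> R) (HBt : is_Btilde a b m x1 x2 Bt) t x :
  Derive (fun s => Bt s x) t = 2 * rv * ThF (ev Jf t x) (ev Jft t x) (ev Jg t x) (ev Jgt t x).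
Proof.
  destruct HBt as [Hc Hk].
  apply is_derive_unique.
  apply (Dgen (fun s => ev Jf s x) (fun s => ev Jg s x) (fun s => ev Jft s x) (fun s => ev Jgt s x)
              (fun s => ev Jftt s x) (fun s => Bt s x) (m * x) (2 * rv)).
  - unfold rv. assert (0 < sqrt 2) by (apply sqrt_lt_R0; lra). lra.
  - intro s. apply dt_f.
  - intro s. apply dt_ft.
  - intro s. apply dt_g.
  - intro s. apply W_pos'.
  - intro s. apply (continuous_comp_2 (fun s => s) (fun _ => x) Bt).
    apply continuous_id. apply continuous_const. apply Hc.
  - intros s hs. rewrite <- ffun_ev in hs. destruct (Hk s x hs) as [k hk]. exists k.
    rewrite hk, ffun_ev, gfun_ev. unfold rv. ring.
  - intros s hs. apply ftt_nz. exact hs.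
Qed.

End Breather.

Theorem lemma3p4 (alpha beta mu x1 x2 : R)
  (Ha : alpha <> 0) (Hb : beta <> 0) (Hm : mu <> 0)
  (HD : Dnv alpha beta mu > 0)
  (Bt : R -> R -> R) (HBt : is_Btilde alpha beta mu x1 x2 Bt) :
  forall t x : R,
    Derive (fun s => Derive (fun y => Bnv alpha beta mu x1 x2 s y) x) t
    + 2 * Derive (fun s => Mnv alpha beta mu x1 x2 s x) t * Bnv alpha beta mu x1 x2 t x
    = (2 * (beta ^ 2 - alpha ^ 2) + 5 * mu ^ 2) * Derive (fun s => Bt s x) t
      + ((alpha ^ 2 + beta ^ 2) ^ 2
         + 6 * mu ^ 2 * (beta ^ 2 - alpha ^ 2 + 3 / 2 * mu ^ 2))
        * (Bnv alpha beta mu x1 x2 t x - mu).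
Proof.
  intros t x.
  rewrite Bxt_eq; try assumption.
  rewrite Mt_eq; try assumption.
  rewrite Bnv_eq; try assumption.
  rewrite (Btd alpha beta mu x1 x2); try assumption.
  apply final_alg.
  - apply rv2.
  - apply Rgt_not_eq. apply W_pos'; assumption.
  - apply P_ev; assumption.
Qed.
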